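(* Let $b$ be a graph over a countable set $X$ and let $x,y,z\in X$. The following statements are equivalent: (i) $R(x,z)=R(x,y)+R(y,z)$. (ii) All paths from $x$ to $z$ (in the graph $b$) pass through $y$.
   Context: A graph over a countable set $X$ is a symmetric map $b:X\times X\to[0,\infty)$ with $b(x,x)=0$ for all $x$ and $\sum_{y\in X}b(x,y)<\infty$ for every $x\in X$. A path in $b$ from $x$ to $z$ is a sequence of distinct vertices $(x_0,\dots,x_n)$ with $x_0=x$, $x_n=z$ and $b(x_{i-1},x_i)>0$ for all $i$. For $f:X\to\mathbb R$ let $Q(f):=\frac12\sum_{x,y\in X}b(x,y)(f(x)-f(y))^2\in[0,\infty]$. The resistance metric is $R(x,y):=\sup\{(f(y)-f(x))^2\mid f:X\to\mathbb R,\ Q(f)=1\}$. *)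

(* Defs.v *)
From HB Require Import structures.
From mathcomp Require Import all_boot all_order all_algebra.
From mathcomp Require Import all_classical all_reals all_analysis.
Set Implicit Arguments. Unset Strict Implicit. Unset Printing Implicit Defensive.
Import Order.TTheory GRing.Theory Num.Theory.
Local Open Scope classical_set_scope.
Local Open Scope ring_scope.

Definition is_graph (R : realType) (X : countType) (b : X -> X -> R) : Prop :=
  [/\ forall x y, 0 <= b x y,
      forall x y, b x y = b y x,
      forall x, b x x = 0
    & forall x, (\esum_(y in [set: X]) (b x y)%:E < +oo)%E].

Definition energy (R : realType) (X : countType) (b : X -> X -> R)
  (f : X -> R) : \bar R :=
  ((2%:R^-1)%:E * \esum_(p in [set: X * X])
      (b p.1 p.2 * (f p.1 - f p.2) ^+ 2)%:E)%E.

Definition resist (R : realType) (X : countType) (b : X -> X -> R)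
  (x y : X) : \bar R :=
  ereal_sup [set ((f y - f x) ^+ 2)%:E | f in [set f : X -> R | energy b f = 1%E]].

Definition is_bpath (R : realType) (X : countType) (b : X -> X -> R)
  (x z : X) (s : seq X) : bool :=
  [&& uniq (x :: s), path (fun u v => 0 < b u v) x s & last x s == z].

(* Main.v *)
Require Import Defs.
From HB Require Import structures.
From mathcomp Require Import all_boot all_order all_algebra.
From mathcomp Require Import all_classical all_reals all_analysis.
From mathcomp Require Import ring lra.
Import Order.TTheory GRing.Theory Num.Theory.
Local Open Scope classical_set_scope.
Local Open Scope ring_scope.
Set Implicit Arguments. Unset Strict Implicit.

Section Esum.
Variables (R : realType) (T : choiceType).

Lemma esumZ (k : R) (a : T -> \bar R) : 0 <= k -> (forall i, (0 <= a i)%E) ->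
  (\esum_(i in [set: T]) (k%:E * a i) = k%:E * \esum_(i in [set: T]) a i)%E.
Proof.
move=> k0 a0; rewrite /esum -ereal_supZl//; last first.
  by apply/set0P; exists 0%E; exists set0 => //; rewrite fsbig_set0.
congr ereal_sup; apply/seteqP; split=> z.
  by move=> [A hA <-]; exists (\sum_(i \in A) a i)%E; [exists A|rewrite ge0_mule_fsumr].
by move=> [_ [A hA <-] <-]; exists A => //; rewrite ge0_mule_fsumr.
Qed.

Lemma esum_single (a : T -> \bar R) t : (forall i, (0 <= a i)%E) ->
  (a t <= \esum_(i in [set: T]) a i)%E.
Proof.
move=> a0; apply: esum_ge; exists [set t].
  by split => //; exact: finite_set1.
by rewrite fsbig_set1.
Qed.

End Esum.

Section G.
Variables (R : realType) (X : countType) (b : X -> X -> R).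
Hypothesis hb : is_graph b.

Lemma b_ge0 u v : 0 <= b u v. Proof. by case: hb. Qed.
Lemma b_sym u v : b u v = b v u. Proof. by case: hb. Qed.
Lemma b_diag u : b u u = 0. Proof. by case: hb. Qed.

Definition term (f : X -> R) (p : X * X) := b p.1 p.2 * (f p.1 - f p.2) ^+ 2.
Definition S (f : X -> R) := (\esum_(p in [set: X * X]) (term f p)%:E)%E.

Lemma term_ge0 f p : 0 <= term f p.
Proof. by rewrite /term mulr_ge0 ?b_ge0 ?sqr_ge0. Qed.

Lemma S_ge0 f : (0 <= S f)%E.
Proof. by apply: esum_ge0 => p _; rewrite lee_fin term_ge0. Qed.

Lemma energyE f : energy b f = ((2%:R^-1)%:E * S f)%E.
Proof. by []. Qed.

Lemma energy1 f : energy b f = 1%E <-> S f = 2%:E.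
Proof.
rewrite energyE; split => [h|->]; last by rewrite -EFinM mulVf.
have := S_ge0 f; case: (S f) h => [r| |] //=; last by rewrite mulry gtr0_sg ?invr_gt0// mul1e.
move=> [h] _; congr EFin; move: h; rewrite -[X in _ = X -> _](mulVf (x:=2%:R)) //.
by move/mulfI => ->.
Qed.

Lemma S_single f p : ((term f p)%:E <= S f)%E.
Proof. by apply: esum_single => q; rewrite lee_fin term_ge0. Qed.

Lemma S_le_comb (g f1 f2 : X -> R) (al be : R) : 0 <= al -> 0 <= be ->
  (forall p, term g p <= al * term f1 p + be * term f2 p) ->
  (S g <= al%:E * S f1 + be%:E * S f2)%E.
Proof.
move=> a0 b0 h; rewrite /S -!esumZ//; last 2 first.
- by move=> q; rewrite lee_fin term_ge0.
- by move=> q; rewrite lee_fin term_ge0.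
rewrite -esumD; last 2 first.
- by move=> q _; rewrite -EFinM lee_fin mulr_ge0 ?term_ge0.
- by move=> q _; rewrite -EFinM lee_fin mulr_ge0 ?term_ge0.
by apply: le_esum => q _; rewrite -!EFinM -EFinD lee_fin.
Qed.

Lemma S_le1 (g f : X -> R) : (forall p, term g p <= term f p) -> (S g <= S f)%E.
Proof. by move=> h; apply: le_esum => q _; rewrite lee_fin. Qed.

Lemma S_eq (g f : X -> R) : (forall p, term g p = term f p) -> S g = S f.
Proof. by move=> h; apply: eq_esum => q _; rewrite h. Qed.

Lemma S_scale (f : X -> R) k : S (fun u => k * f u) = ((k ^+ 2)%:E * S f)%E.
Proof.
rewrite /S -esumZ ?sqr_ge0//; last by move=> q; rewrite lee_fin term_ge0.
by apply: eq_esum => q _; rewrite -EFinM /term; congr EFin; ring.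
Qed.

Lemma S_opp (f : X -> R) : S (fun u => - f u) = S f.
Proof. by apply: S_eq => q; rewrite /term; congr (_ * _); ring. Qed.

Lemma S_shift (f : X -> R) k : S (fun u => f u + k) = S f.
Proof. by apply: S_eq => q; rewrite /term; congr (_ * _); ring. Qed.

Lemma trunc_pt (a c d : R) :
  ((if a <= c then a else c) - (if d <= c then d else c)) ^+ 2 +
  ((if a <= c then c else a) - (if d <= c then c else d)) ^+ 2 <= (a - d) ^+ 2.
Proof.
by case: (lerP a c) => ac; case: (lerP d c) => dc; nra.
Qed.

Definition tmin (f : X -> R) c u := if f u <= c then f u else c.
Definition tmax (f : X -> R) c u := if f u <= c then c else f u.

Lemma S_trunc (f : X -> R) c : (S (tmin f c) + S (tmax f c) <= S f)%E.
Proof.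
rewrite /S -esumD; last 2 first.
- by move=> q _; rewrite lee_fin term_ge0.
- by move=> q _; rewrite lee_fin term_ge0.
apply: le_esum => q _; rewrite -EFinD lee_fin /term -mulrDr.
by apply: ler_wpM2l; [exact: b_ge0|exact: trunc_pt].
Qed.

End G.

Section G3.
Variables (R : realType) (X : countType) (b : X -> X -> R).
Hypothesis hb : is_graph b.

Lemma row_esum (G : X -> R) w : (forall v, 0 <= G v) ->
  (\esum_(p in [set: X * X]) (if p.1 == w then G p.2 else 0)%:E =
   \esum_(v in [set: X]) (G v)%:E)%E.
Proof.
move=> G0.
transitivity (\esum_(p in [set: X * X])
   (if p \in [set p : X * X | p.1 = w] then (G p.2)%:E else 0%E))%E.
  apply: eq_esum => p _.
  case: (eqVneq p.1 w) => h.
    by rewrite ifT //; apply: mem_set.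
  by rewrite memNset //= => /eqP; rewrite (negbTE h).
rewrite -esum_mkcond (reindex_esum [set: X] _ (fun v => (w, v))) //.
split.
- by move=> v _.
- by move=> u v _ _ [].
- by move=> [p1 p2] /= <-; exists p2.
Qed.

Lemma col_esum (G : X -> R) w : (forall v, 0 <= G v) ->
  (\esum_(p in [set: X * X]) (if p.2 == w then G p.1 else 0)%:E =
   \esum_(v in [set: X]) (G v)%:E)%E.
Proof.
move=> G0.
transitivity (\esum_(p in [set: X * X])
   (if p \in [set p : X * X | p.2 = w] then (G p.1)%:E else 0%E))%E.
  apply: eq_esum => p _.
  case: (eqVneq p.2 w) => h.
    by rewrite ifT //; apply: mem_set.
  by rewrite memNset //= => /eqP; rewrite (negbTE h).
rewrite -esum_mkcond (reindex_esum [set: X] _ (fun v => (v, w))) //.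
split.
- by move=> v _.
- by move=> u v _ _ [].
- by move=> [p1 p2] /= <-; exists p1.
Qed.

Definition deg w := fine (\esum_(v in [set: X]) (b w v)%:E)%E.

Lemma degE w : (\esum_(v in [set: X]) (b w v)%:E)%E = (deg w)%:E.
Proof.
rewrite /deg fineK//; case: hb => _ _ _ /(_ w) h.
have h0 : (0 <= \esum_(v in [set: X]) (b w v)%:E)%E.
  by apply: esum_ge0 => v _; rewrite lee_fin b_ge0.
by rewrite ge0_fin_numE.
Qed.

Lemma deg_ge0 w : 0 <= deg w.
Proof.
have := degE w; have : (0 <= \esum_(v in [set: X]) (b w v)%:E)%E.
  by apply: esum_ge0 => v _; rewrite lee_fin b_ge0.
by move=> h1 h2; rewrite h2 lee_fin in h1.
Qed.

Lemma deg_ge w v : b w v <= deg w.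
Proof.
rewrite -lee_fin -degE; apply: (@esum_single _ _ (fun v => (b w v)%:E)).
by move=> u; rewrite lee_fin b_ge0.
Qed.

End G3.

Section G4.
Variables (R : realType) (X : countType) (b : X -> X -> R).
Hypothesis hb : is_graph b.

Definition ind (u : X) (v : X) : R := if v == u then 1 else 0.

Lemma S_ind_le u : (S b (ind u) <= (2 * deg b u)%:E)%E.
Proof.
apply: (@le_trans _ _ (\esum_(p in [set: X * X])
   ((if p.1 == u then b u p.2 else 0)%:E + (if p.2 == u then b u p.1 else 0)%:E))%E).
  apply: le_esum => p _; rewrite -EFinD lee_fin /term /ind.
  case: (eqVneq p.1 u) => h1; case: (eqVneq p.2 u) => h2.
  - by rewrite h1 h2 subrr expr0n /= mulr0 addr_ge0 ?(b_ge0 hb).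
  - by rewrite h1 subr0 expr1n mulr1 addr0.
  - by rewrite h2 sub0r sqrrN expr1n mulr1 add0r (b_sym hb).
  - by rewrite subrr expr0n /= mulr0 addr0.
rewrite esumD; last 2 first.
- by move=> p _; case: ifP => _; rewrite lee_fin ?(b_ge0 hb).
- by move=> p _; case: ifP => _; rewrite lee_fin ?(b_ge0 hb).
rewrite (@row_esum _ _ (fun v => b u v)); last by move=> v; exact: (b_ge0 hb).
rewrite (@col_esum _ _ (fun v => b u v)); last by move=> v; exact: (b_ge0 hb).
by rewrite (degE hb) // -EFinD lee_fin; lra.
Qed.

Lemma S_fin (f : X -> R) e : (S b f <= e%:E)%E -> S b f = (fine (S b f))%:E.
Proof.
move=> h; rewrite fineK //; rewrite ge0_fin_numE ?(S_ge0 hb) //.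
by apply: (le_lt_trans h); rewrite ltry.
Qed.

Hypothesis hnz : exists u v, b u v != 0.

Lemma exists_h0 : exists h0 : X -> R, S b h0 = 2%:E.
Proof.
case: hnz => u [v huv].
have buv : 0 < b u v by rewrite lt_def huv (b_ge0 hb).
have hle := S_ind_le u.
have hfin := S_fin hle.
set s := fine (S b (ind u)) in hfin.
have hs : b u v <= s.
  rewrite -lee_fin -hfin.
  apply: le_trans (S_single hb _ (u, v)).
  rewrite lee_fin /term /ind /=.
  case: (eqVneq v u) => hvu; first by rewrite hvu (b_diag hb) in buv; rewrite ltxx in buv.
  by rewrite eqxx subr0 expr1n mulr1.
have s0 : 0 < s by apply: lt_le_trans hs.
exists (fun w => Num.sqrt (2 / s) * ind u w).
rewrite (S_scale hb) // hfin sqr_sqrtr; last by rewrite divr_ge0 // ltW.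
by rewrite -EFinM mulfVK // gt_eqF.
Qed.

Lemma resist_ub (f : X -> R) x y : S b f = 2%:E ->
  (((f y - f x) ^+ 2)%:E <= resist b x y)%E.
Proof.
move=> hf; apply: ereal_sup_ubound; exists f => //=.
exact/energy1.
Qed.

Lemma resist_ge0 x y : (0 <= resist b x y)%E.
Proof.
case: exists_h0 => h0 h; apply: le_trans (resist_ub x y h).
by rewrite lee_fin sqr_ge0.
Qed.

Lemma resist_le x y (r : R) :
  (forall f : X -> R, S b f = 2%:E -> (f y - f x) ^+ 2 <= r) ->
  (resist b x y <= r%:E)%E.
Proof.
move=> h; apply: ge_ereal_sup => _ [f hf <-]; rewrite lee_fin; apply: h.
exact/energy1.
Qed.

Lemma resist_B (g : X -> R) x y e : 0 < e -> (S b g <= e%:E)%E ->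
  ((2 * (g y - g x) ^+ 2 / e)%:E <= resist b x y)%E.
Proof.
move=> e0 hge.
have hfin := S_fin hge.
set s := fine (S b g) in hfin.
have s0 : 0 <= s by rewrite -lee_fin -hfin (S_ge0 hb).
have se : s <= e by rewrite -lee_fin -hfin.
have [sp|s00] := ltrP 0 s.
  pose k := Num.sqrt (2 / s).
  have hk : k ^+ 2 = 2 / s by rewrite sqr_sqrtr // divr_ge0 // ltW.
  have := @resist_ub (fun w => k * g w) x y.
  rewrite (S_scale hb) // hfin hk -EFinM mulfVK ?gt_eqF // => /(_ erefl).
  apply: le_trans; rewrite lee_fin.
  rewrite -mulrBr exprMn hk.
  have h1 : e^-1 <= s^-1 by rewrite lef_pV2 ?posrE.
  have h2 : 0 <= (g y - g x) ^+ 2 by exact: sqr_ge0.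
  nra.
have s_0 : s = 0 by apply/le_anti; rewrite s00 s0.
have t0 : forall p, term b g p = 0.
  move=> p; apply/le_anti; rewrite (term_ge0 hb) // andbT.
  by rewrite -lee_fin (le_trans (S_single hb g p)) // hfin s_0.
case: exists_h0 => h0 hh0.
have [dg|dg] := eqVneq (g y - g x) 0.
  rewrite dg expr0n /= mulr0 mul0r.
  apply: le_trans (resist_ub x y hh0); by rewrite lee_fin sqr_ge0.
pose m := 1 + 2 / e.
pose t := (m * (g y - g x) - (h0 y - h0 x)) / (g y - g x).
have := @resist_ub (fun w => h0 w + t * g w) x y.
have -> : S b (fun w => h0 w + t * g w) = S b h0.
  apply: S_eq => p; rewrite /term.
  have := t0 p; rewrite /term => /eqP; rewrite mulf_eq0 => /orP[/eqP ->|].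
    by rewrite !mul0r.
  rewrite sqrf_eq0 subr_eq0 => /eqP ->; congr (_ * _); congr (_ ^+ 2); ring.
move=> /(_ hh0); apply: le_trans; rewrite lee_fin.
have -> : h0 y + t * g y - (h0 x + t * g x) = m * (g y - g x).
  rewrite /t; field; exact: dg.
rewrite exprMn mulrAC; apply: ler_wpM2r; first exact: sqr_ge0.
rewrite /m; have ie : 0 < 2 / e by rewrite divr_gt0.
nra.
Qed.

End G4.

Section G5.
Variables (R : realType) (X : countType) (b : X -> X -> R).
Hypothesis hb : is_graph b.
Hypothesis hnz : exists u v, b u v != 0.

Lemma resist_B' (g : X -> R) x y (A e : R) : resist b x y = A%:E -> 0 <= e ->
  (S b g <= e%:E)%E -> 2 * (g y - g x) ^+ 2 <= A * e.
Proof.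
move=> hA e0 hg.
have key : forall t, 0 < t -> t >= e -> 2 * (g y - g x) ^+ 2 <= A * t.
  move=> t t0 te; have te' : (e%:E <= t%:E)%E by rewrite lee_fin.
  have := resist_B hb hnz x y t0 (le_trans hg te').
  by rewrite hA lee_fin ler_pdivrMr.
have [ep|e00] := ltrP 0 e; first exact: key.
have ee : e = 0 by apply/le_anti; rewrite e00 e0.
rewrite ee mulr0.
have A0 : 0 <= A by rewrite -lee_fin -hA (resist_ge0 hb hnz).
set z := 2 * (g y - g x) ^+ 2.
have z0 : 0 <= z by rewrite mulr_ge0 ?sqr_ge0.
rewrite leNgt; apply/negP => zp.
have hA1 : 0 < 2 * (A + 1) by lra.
have hh : 0 < z / (2 * (A + 1)) by rewrite divr_gt0.
move: (key _ hh); rewrite ee => /(_ (ltW hh)) h.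
have : A * (z / (2 * (A + 1))) < z.
  rewrite mulrA ltr_pdivrMr // mulrC; nra.
by move/(le_lt_trans h); rewrite ltxx.
Qed.

Lemma resist_xx x : resist b x x = 0%E.
Proof.
apply/le_anti; rewrite resist_ge0 // andbT.
by apply: le_trans (resist_le (r := 0) _ _) _ => // f _; rewrite subrr expr0n.
Qed.

Lemma resist_pos x y (A : R) : x != y -> resist b x y = A%:E -> 0 < A.
Proof.
move=> xy hA.
have := resist_B' hA _ (S_ind_le hb x).
rewrite mulr_ge0 ?(deg_ge0 hb) // => /(_ isT).
rewrite /ind eqxx eq_sym (negbTE xy) sub0r sqrrN expr1n mulr1.
have A0 : 0 <= A by rewrite -lee_fin -hA (resist_ge0 hb hnz).
have := deg_ge0 hb x; nra.
Qed.

End G5.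

Lemma numN (R : realFieldType) (p q A B e1 e2 : R) : 0 <= p -> 0 <= q ->
  0 <= A -> 0 <= B -> 0 <= e1 -> 0 <= e2 -> e1 + e2 <= 1 ->
  p ^+ 2 <= A * e1 -> q ^+ 2 <= B * e2 ->
  (p + q) ^+ 2 + (A * e1 - p ^+ 2) <= A + B.
Proof.
move=> p0 q0 A0 B0 e10 e20 e12 hp hq.
have [e1p|e1n] := ltrP 0 e1; last first.
  have e1z : e1 = 0 by apply/le_anti; rewrite e1n.
  have pz : p = 0 by move: hp; rewrite e1z mulr0; nra.
  rewrite pz e1z; nra.
have [e2p|e2n] := ltrP 0 e2; last first.
  have e2z : e2 = 0 by apply/le_anti; rewrite e2n.
  have qz : q = 0 by move: hq; rewrite e2z mulr0; nra.
  rewrite qz; nra.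
pose P := p ^+ 2 / e1; pose Q := q ^+ 2 / e2.
have hP : P * e1 = p ^+ 2 by rewrite /P mulfVK ?gt_eqF.
have hQ : Q * e2 = q ^+ 2 by rewrite /Q mulfVK ?gt_eqF.
have PA : P <= A by rewrite /P ler_pdivrMr.
have QB : Q <= B by rewrite /Q ler_pdivrMr.
have P0 : 0 <= P by rewrite /P divr_ge0 ?sqr_ge0 ?ltW.
have Q0 : 0 <= Q by rewrite /Q divr_ge0 ?sqr_ge0 ?ltW.
have cs : (p + q) ^+ 2 * (e1 * e2) <= (P + Q) * (e1 + e2) * (e1 * e2).
  have -> : (P + Q) * (e1 + e2) * (e1 * e2) = (p ^+ 2 * e2 + q ^+ 2 * e1) * (e1 + e2).
    rewrite -hP -hQ; ring.
  have : 0 <= (p * e2 - q * e1) ^+ 2 by exact: sqr_ge0.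
  nra.
have e12p : 0 < e1 * e2 by rewrite mulr_gt0.
have cs' : (p + q) ^+ 2 <= (P + Q) * (e1 + e2).
  by move: cs; rewrite ler_pM2r.
have : (P + Q) * (e1 + e2) <= P + Q by nra.
have : A * e1 - p ^+ 2 = (A - P) * e1 by rewrite -hP; ring.
nra.
Qed.

Section G6.
Variables (R : realType) (X : countType) (b : X -> X -> R).
Hypothesis hb : is_graph b.
Hypothesis hnz : exists u v, b u v != 0.

Lemma core_mid (f : X -> R) x y z (A B : R) : S b f = 2%:E ->
  resist b x y = A%:E -> resist b y z = B%:E -> f x <= f y <= f z ->
  exists s1, [/\ S b (tmin f (f y)) = s1%:E, 0 <= s1, s1 <= 2,
     2 * (f y - f x) ^+ 2 <= A * s1 &
     (f z - f x) ^+ 2 + (A * (s1 / 2) - (f y - f x) ^+ 2) <= A + B].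
Proof.
move=> hf hA hB /andP[axy ayz].
have A0 : 0 <= A by rewrite -lee_fin -hA (resist_ge0 hb hnz).
have B0 : 0 <= B by rewrite -lee_fin -hB (resist_ge0 hb hnz).
have ht := S_trunc hb f (f y).
rewrite hf in ht.
have h1 : (S b (tmin f (f y)) <= 2%:E)%E.
  apply: le_trans ht; rewrite leeDl // S_ge0 //.
have h2 : (S b (tmax f (f y)) <= 2%:E)%E.
  apply: le_trans ht; rewrite leeDr // S_ge0 //.
have e1 := S_fin hb h1; have e2 := S_fin hb h2.
set s1 := fine (S b (tmin f (f y))) in e1.
set s2 := fine (S b (tmax f (f y))) in e2.
have s10 : 0 <= s1 by rewrite -lee_fin -e1 S_ge0.
have s20 : 0 <= s2 by rewrite -lee_fin -e2 S_ge0.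
have s12 : s1 + s2 <= 2 by move: ht; rewrite e1 e2 -EFinD lee_fin.
have e1' : (S b (tmin f (f y)) <= s1%:E)%E by rewrite e1.
have e2' : (S b (tmax f (f y)) <= s2%:E)%E by rewrite e2.
have hp := resist_B' hb hnz hA s10 e1'.
have hq := resist_B' hb hnz hB s20 e2'.
rewrite /tmin /tmax lexx axy in hp.
rewrite /tmin /tmax lexx in hq.
have p0 : 0 <= f y - f x by lra.
have hp' : (f y - f x) ^+ 2 <= A * (s1 / 2).
  by rewrite mulrA ler_pdivlMr //; lra.
have [zy|yz] := lerP (f z) (f y).
  have zy' : f z = f y by apply/le_anti; rewrite zy ayz.
  rewrite zy' in hq *.
  exists s1; split => //; first by lra.
  have := @numN _ (f y - f x) 0 A B (s1 / 2) (s2 / 2) p0 (lexx 0) A0 B0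
     ltac:(lra) ltac:(lra) ltac:(lra) hp'.
  rewrite expr0n /= mulr_ge0 ?divr_ge0 // => /(_ isT).
  by rewrite addr0.
rewrite (lt_geF yz) in hq.
have q0 : 0 <= f z - f y by lra.
have hq' : (f z - f y) ^+ 2 <= B * (s2 / 2).
  by rewrite mulrA ler_pdivlMr //; lra.
exists s1; split => //; first by lra.
have := @numN _ (f y - f x) (f z - f y) A B (s1 / 2) (s2 / 2) p0 q0 A0 B0
     ltac:(lra) ltac:(lra) ltac:(lra) hp' hq'.
by have -> : f y - f x + (f z - f y) = f z - f x by ring.
Qed.

End G6.

Section G7.
Variables (R : realType) (X : countType) (b : X -> X -> R).
Hypothesis hb : is_graph b.
Hypothesis hnz : exists u v, b u v != 0.

Lemma resist_fin_ge0 x y A : resist b x y = A%:E -> 0 <= A.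
Proof. by move=> hA; rewrite -lee_fin -hA (resist_ge0 hb hnz). Qed.

Lemma bound_e2 (f : X -> R) x y A : S b f = 2%:E -> resist b x y = A%:E ->
  (f y - f x) ^+ 2 <= A.
Proof.
move=> hf hA.
have h2 : (S b f <= 2%:E)%E by rewrite hf.
have := resist_B' hb hnz hA (ler0n _ 2) h2; lra.
Qed.

Lemma key_bound (f : X -> R) x y z A B : S b f = 2%:E ->
  resist b x y = A%:E -> resist b y z = B%:E -> f x <= f z ->
  (f z - f x) ^+ 2 <= A + B.
Proof.
move=> hf hA hB xz.
have A0 := resist_fin_ge0 hA; have B0 := resist_fin_ge0 hB.
have [yx|xy] := ltrP (f y) (f x).
  have := bound_e2 hf hB; nra.
have [zy|yz] := ltrP (f z) (f y).
  have := bound_e2 hf hA; nra.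
have [s1 [_ s10 _ hp hm]] := core_mid hb hnz hf hA hB (introT andP (conj xy yz)).
nra.
Qed.

Lemma resist_tri x y z : (resist b x z <= resist b x y + resist b y z)%E.
Proof.
have g0 := resist_ge0 hb hnz.
case Exy: (resist b x y) => [A| |]; last by have := g0 x y; rewrite Exy.
- case Eyz: (resist b y z) => [B| |]; last by have := g0 y z; rewrite Eyz.
  + rewrite -EFinD; apply: (resist_le hb) => f hf.
    have [xz|zx] := lerP (f x) (f z); first exact: key_bound hf Exy Eyz xz.
    have hf' : S b (fun u => - f u) = 2%:E by rewrite S_opp.
    have nz : - f x <= - f z by lra.
    have := key_bound hf' Exy Eyz nz.
    by have -> : (- f z - - f x) ^+ 2 = (f z - f x) ^+ 2 by ring.
  + by rewrite addey ?leey.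
- rewrite addye ?leey //.
  by apply/negP => /eqP h; have := g0 y z; rewrite h.
Qed.

End G7.

Section G8.
Variables (R : realType) (X : countType) (b : X -> X -> R).
Hypothesis hb : is_graph b.
Hypothesis hnz : exists u v, b u v != 0.

Lemma path_avoid (e : rel X) y : (forall u v, e u v -> v != y) ->
  forall s x, path e x s -> forall v, v \in s -> v != y.
Proof.
move=> he; elim=> [|w s IH] x //= /andP[exw ps] v.
rewrite inE => /orP[/eqP ->|]; first exact: he exw.
exact: IH ps v.
Qed.

Variables (x y z : X).
Hypothesis xy : x != y.
Hypothesis zy : z != y.
Hypothesis sep : forall s : seq X, is_bpath b x z s -> y \in x :: s.

Definition erel : rel X := fun u v => (0 < b u v) && (v != y).
Definition C (u : X) : Prop := exists s, path erel x s && (last x s == u).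

Lemma C_x : C x. Proof. exists (@nil X) => /=. exact: eqxx. Qed.

Lemma C_closed u v : C u -> 0 < b u v -> v != y -> C v.
Proof.
move=> [s /andP[ps /eqP ls]] buv vy; exists (rcons s v).
by rewrite rcons_path ps ls /erel buv vy last_rcons eqxx.
Qed.

Lemma C_y : ~ C y.
Proof.
move=> [s /andP[ps /eqP ls]].
case: s ps ls => [|w s] ps ls; first by move: xy; rewrite /= in ls; rewrite ls eqxx.
have hl : last x (w :: s) \in w :: s by rewrite /= mem_last.
have H : forall u v, erel u v -> v != y by move=> u v /andP[].
by have := path_avoid H ps hl; rewrite ls eqxx.
Qed.

Lemma C_z : ~ C z.
Proof.
move=> [s /andP[ps /eqP ls]].
case: (shortenP ps) ls => p' pp' up' _ lp.
have hb' : is_bpath b x z p'.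
  rewrite /is_bpath up' lp eqxx andbT /=.
  by apply: sub_path pp' => u v /andP[].
have := sep hb'; rewrite inE eq_sym (negbTE xy) /= => hy.
have H : forall u v, erel u v -> v != y by move=> u v /andP[].
by have := path_avoid H pp' hy; rewrite eqxx.
Qed.

Definition glue (f1 f2 : X -> R) u :=
  if `[< C u >] then (f1 y - f1 x) * (f1 u - f1 y)
  else (f2 z - f2 y) * (f2 u - f2 y).

Lemma glue_term (f1 f2 : X -> R) pr :
  term b (glue f1 f2) pr <= (f1 y - f1 x) ^+ 2 * term b f1 pr +
                             (f2 z - f2 y) ^+ 2 * term b f2 pr.
Proof.
case: pr => u v; rewrite /term /glue /=.
set p := f1 y - f1 x; set q := f2 z - f2 y.
have t1 := term_ge0 hb f1 (u, v); have t2 := term_ge0 hb f2 (u, v).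
rewrite /term /= in t1 t2.
have p2 := sqr_ge0 p; have q2 := sqr_ge0 q.
have bu := b_ge0 hb u v.
case: (asboolP (C u)) => cu; case: (asboolP (C v)) => cv.
- have -> : b u v * (p * (f1 u - f1 y) - p * (f1 v - f1 y)) ^+ 2 =
    p ^+ 2 * (b u v * (f1 u - f1 v) ^+ 2) by ring.
  by rewrite lerDl; exact: mulr_ge0.
- have [b0|bp] := eqVneq (b u v) 0.
    by rewrite b0 !mul0r !mulr0 addr0.
  have bp' : 0 < b u v by rewrite lt_def bp bu.
  have [vy|vny] := eqVneq v y; last by case: cv; exact: C_closed cu bp' vny.
  rewrite vy subrr mulr0 subr0.
  have -> : b u y * (p * (f1 u - f1 y)) ^+ 2 = p ^+ 2 * (b u y * (f1 u - f1 y) ^+ 2)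
    by ring.
  by rewrite lerDl -vy; exact: mulr_ge0.
- have [b0|bp] := eqVneq (b u v) 0.
    by rewrite b0 !mul0r !mulr0 addr0.
  have bp' : 0 < b v u by rewrite (b_sym hb) lt_def bp bu.
  have [uy|uny] := eqVneq u y; last by case: cu; exact: C_closed cv bp' uny.
  rewrite uy subrr mulr0 sub0r sqrrN.
  have -> : b y v * (p * (f1 v - f1 y)) ^+ 2 = p ^+ 2 * (b y v * (f1 y - f1 v) ^+ 2)
    by ring.
  by rewrite lerDl -uy; exact: mulr_ge0.
- have -> : b u v * (q * (f2 u - f2 y) - q * (f2 v - f2 y)) ^+ 2 =
    q ^+ 2 * (b u v * (f2 u - f2 v) ^+ 2) by ring.
  by rewrite lerDr; exact: mulr_ge0.
Qed.

Lemma glue_bound (f1 f2 : X -> R) : S b f1 = 2%:E -> S b f2 = 2%:E ->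
  (((f1 y - f1 x) ^+ 2 + (f2 z - f2 y) ^+ 2)%:E <= resist b x z)%E.
Proof.
move=> h1 h2.
set p := f1 y - f1 x; set q := f2 z - f2 y.
have hS : (S b (glue f1 f2) <= (2 * (p ^+ 2 + q ^+ 2))%:E)%E.
  apply: le_trans (S_le_comb hb (sqr_ge0 p) (sqr_ge0 q) (glue_term f1 f2)) _.
  by rewrite h1 h2 -!EFinM -EFinD lee_fin; lra.
have gx : glue f1 f2 x = - p ^+ 2.
  rewrite /glue; case: (asboolP (C x)) => [_|/(_ C_x)//]; rewrite /p; ring.
have gz : glue f1 f2 z = q ^+ 2.
  by rewrite /glue; case: (asboolP (C z)) => [/C_z//|_].
have [e0|ep] := eqVneq (p ^+ 2 + q ^+ 2) 0.
  by rewrite e0 (resist_ge0 hb hnz).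
have ep' : 0 < 2 * (p ^+ 2 + q ^+ 2).
  have := sqr_ge0 p; have := sqr_ge0 q; move: ep; rewrite lt_def; lra.
have := resist_B hb hnz x z ep' hS.
rewrite gx gz opprK.
rewrite (addrC (q ^+ 2)).
have -> : 2 * (p ^+ 2 + q ^+ 2) ^+ 2 / (2 * (p ^+ 2 + q ^+ 2)) = p ^+ 2 + q ^+ 2.
  by field; exact: ep.
by [].
Qed.

Lemma sum_le : (resist b x y + resist b y z <= resist b x z)%E.
Proof.
have g0 := resist_ge0 hb hnz.
case Exz: (resist b x z) => [r| |]; last by have := g0 x z; rewrite Exz.
- case: (exists_h0 hb hnz) => h0 hh0.
  have Axy : (resist b x y <= (r - (h0 z - h0 y) ^+ 2)%:E)%E.
    apply: (resist_le hb) => f hf.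
    have := glue_bound hf hh0; rewrite Exz lee_fin; lra.
  case Exy: (resist b x y) Axy => [A| |] Axy; last by have := g0 x y; rewrite Exy.
  + have Byz : (resist b y z <= (r - A)%:E)%E.
      apply: (resist_le hb) => f hf.
      suff : A <= r - (f z - f y) ^+ 2 by lra.
      rewrite -lee_fin -Exy; apply: (resist_le hb) => f1 hf1.
      have := glue_bound hf1 hf; rewrite Exz lee_fin; lra.
    case Eyz: (resist b y z) Byz => [B| |] Byz; last by have := g0 y z; rewrite Eyz.
    * by rewrite -EFinD lee_fin; rewrite lee_fin in Byz; lra.
    * by [].
  + by [].
- by rewrite leey.
Qed.

Lemma sep_eq : resist b x z = (resist b x y + resist b y z)%E.
Proof. by apply/le_anti; rewrite sum_le (resist_tri hb hnz). Qed.

End G8.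

Section G9.
Variables (R : realType) (X : countType) (b : X -> X -> R).
Hypothesis hb : is_graph b.

Lemma esum_rc (a : X * X -> R) (F : X -> R) (k : R) w :
  (forall p, 0 <= a p) -> (forall v, 0 <= F v) -> 0 <= k ->
  (\esum_(p in [set: X * X])
     (a p + k * ((if p.1 == w then F p.2 else 0) + (if p.2 == w then F p.1 else 0)))%:E
   = \esum_(p in [set: X * X]) (a p)%:E +
     k%:E * (\esum_(v in [set: X]) (F v)%:E + \esum_(v in [set: X]) (F v)%:E))%E.
Proof.
move=> a0 F0 k0.
have rc0 : forall p : X * X,
    0 <= (if p.1 == w then F p.2 else 0) + (if p.2 == w then F p.1 else 0).
  by move=> p; apply: addr_ge0; case: ifP.
rewrite (eq_esum (b := fun p => (a p)%:E +
   k%:E * ((if p.1 == w then F p.2 else 0)%:E + (if p.2 == w then F p.1 else 0)%:E))%E);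
  last by move=> p _; rewrite EFinD EFinM EFinD.
rewrite esumD; last 2 first.
- by move=> p _; rewrite lee_fin.
- by move=> p _; rewrite -EFinD -EFinM lee_fin mulr_ge0.
rewrite esumZ //.
rewrite esumD; last 2 first.
- by move=> p _; case: ifP; rewrite lee_fin.
- by move=> p _; case: ifP; rewrite lee_fin.
by rewrite (row_esum (G := F)) // (col_esum (G := F)).
Qed.

Definition pos (t : R) := if t <= 0 then 0 else t.
Lemma pos_ge0 t : 0 <= pos t. Proof. by rewrite /pos; case: ifP => // /negbT; rewrite -ltNge => /ltW. Qed.
Lemma pos_ge t : t <= pos t. Proof. by rewrite /pos; case: ifP. Qed.

Definition upd (g : X -> R) w t v := if v == w then t else g v.

Lemma local_pt (g : X -> R) w c eps p : (forall v, g v <= c) -> 0 <= eps ->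
  term b (upd g w (g w - eps)) p + (2 * eps) *
    ((if p.1 == w then b w p.2 * pos (g w - g p.2) else 0) +
     (if p.2 == w then b w p.1 * pos (g w - g p.1) else 0))
  <= term b g p + 1 *
    ((if p.1 == w then b w p.2 * (eps ^+ 2 + 2 * eps * (c - g w)) else 0) +
     (if p.2 == w then b w p.1 * (eps ^+ 2 + 2 * eps * (c - g w)) else 0)).
Proof.
move=> gc e0; case: p => p1 p2; rewrite /term /upd /=.
have inner : forall v, (g w - eps - g v) ^+ 2 + 2 * eps * pos (g w - g v) <=
    (g w - g v) ^+ 2 + (eps ^+ 2 + 2 * eps * (c - g w)).
  move=> v; have := gc v; have := gc w; rewrite /pos; case: ifP => h; nra.
case: (eqVneq p1 w) => h1; case: (eqVneq p2 w) => h2.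
- rewrite h1 h2 (b_diag hb); lra.
- rewrite h1.
  have := inner p2; have := b_ge0 hb w p2; nra.
- rewrite h2 (b_sym hb p1 w).
  have := inner p1; have := b_ge0 hb w p1; nra.
- lra.
Qed.

Lemma local_lemma (g : X -> R) w u c eps : (forall v, g v <= c) -> 0 <= eps ->
  (S b (upd g w (g w - eps)) + (4 * eps * (b w u * (g w - g u)))%:E <=
   S b g + (2 * (eps ^+ 2 + 2 * eps * (c - g w)) * deg b w)%:E)%E.
Proof.
move=> gc e0.
have K0 : 0 <= eps ^+ 2 + 2 * eps * (c - g w).
  have := gc w; nra.
set K := eps ^+ 2 + 2 * eps * (c - g w).
pose F1 := fun v => b w v * pos (g w - g v).
pose F2 := fun v => b w v * K.
have F10 : forall v, 0 <= F1 v by move=> v; rewrite mulr_ge0 ?(b_ge0 hb) ?pos_ge0.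
have F20 : forall v, 0 <= F2 v by move=> v; rewrite mulr_ge0 ?(b_ge0 hb).
set g' := upd g w (g w - eps).
have H : (\esum_(p in [set: X * X]) (term b g' p + (2 * eps) *
    ((if p.1 == w then F1 p.2 else 0) + (if p.2 == w then F1 p.1 else 0)))%:E <=
   \esum_(p in [set: X * X]) (term b g p + 1 *
    ((if p.1 == w then F2 p.2 else 0) + (if p.2 == w then F2 p.1 else 0)))%:E)%E.
  by apply: le_esum => p _; rewrite lee_fin /F1 /F2; exact: local_pt.
rewrite !esum_rc // ?(term_ge0 hb) ?mulr_ge0 //  in H; last by move=> p; exact: term_ge0.
have e2 : (\esum_(v in [set: X]) (F2 v)%:E = (K * deg b w)%:E)%E.
  rewrite (eq_esum (b := fun v => (K%:E * (b w v)%:E)%E)); last first.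
    by move=> v _; rewrite /F2 -EFinM mulrC.
  by rewrite esumZ // ?(degE hb) // => v; rewrite lee_fin (b_ge0 hb).
have e1 : ((b w u * (g w - g u))%:E <= \esum_(v in [set: X]) (F1 v)%:E)%E.
  apply: le_trans (esum_single (a := fun v => (F1 v)%:E) u _); last first.
    by move=> v; rewrite lee_fin.
  by rewrite lee_fin /F1 ler_wpM2l ?(b_ge0 hb) ?pos_ge.
rewrite e2 -EFinD mul1e in H.
have -> : 2 * K * deg b w = K * deg b w + K * deg b w by ring.
apply: (le_trans _ H); rewrite leeD2l //.
have -> : 4 * eps * (b w u * (g w - g u)) =
   2 * eps * (b w u * (g w - g u) + b w u * (g w - g u)) by ring.
rewrite EFinM EFinD; apply: lee_wpmul2l; first by rewrite lee_fin mulr_ge0.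
exact: leeD.
by move=> p; exact: term_ge0.
Qed.

Lemma S_upd_simpl (g : X -> R) w : upd g w (g w) = g.
Proof. by apply: funext => v; rewrite /upd; case: eqVneq => // ->. Qed.

End G9.

Section G10.
Variables (R : realType) (X : countType) (b : X -> X -> R).
Hypothesis hb : is_graph b.
Hypothesis hnz : exists u v, b u v != 0.
Variables (x y z : X) (A B : R).
Hypothesis hA : resist b x y = A%:E.
Hypothesis hB : resist b y z = B%:E.
Hypothesis hAp : 0 < A.
Hypothesis hBp : 0 < B.

Definition Good (eta : R) (f : X -> R) :=
  [/\ S b f = 2%:E, f x <= f y, f y <= f z & A + B - eta < (f z - f x) ^+ 2].

Definition Claim (v : X) := forall tau, 0 < tau -> exists2 eta, 0 < eta &
  forall f, Good eta f -> f y - tmin f (f y) v <= tau.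

Lemma tmin_le (f : X -> R) c v : tmin f c v <= c.
Proof. by rewrite /tmin; case: ifP. Qed.

Lemma good_gap eta f : Good eta f ->
  exists s1, [/\ S b (tmin f (f y)) = s1%:E, 2 * (f y - f x) ^+ 2 <= A * s1 &
     A * s1 - 2 * (f y - f x) ^+ 2 < 2 * eta].
Proof.
move=> [hf xy yz hn].
have [s1 [e1 _ _ hp hm]] := core_mid hb hnz hf hA hB (introT andP (conj xy yz)).
exists s1; split => //; lra.
Qed.

Lemma step v u : v != x -> v != y -> 0 < b v u -> Claim v -> Claim u.
Proof.
move=> vx vy bvu cv tau tau0.
have d0 : 0 <= deg b v := deg_ge0 hb v.
have [eps [eps0 epsd]] : exists eps, 0 < eps /\ eps * ((deg b v) + 1) = b v u * tau / 2.
  exists (b v u * tau / (2 * ((deg b v) + 1))); split.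
    by rewrite divr_gt0 ?mulr_gt0 //; lra.
  have hd1 : (deg b v) + 1 != 0 by rewrite gt_eqF //; lra.
  by field.
have [tau' [tau'0 tau'd]] : exists t, 0 < t /\ t * (b v u + (deg b v)) = b v u * tau / 4.
  exists (b v u * tau / (4 * (b v u + (deg b v)))); split.
    by rewrite divr_gt0 ?mulr_gt0 //; lra.
  have hbd : b v u + (deg b v) != 0 by rewrite gt_eqF //; lra.
  by field.
have [eta' eta'0 heta'] := cv tau' tau'0.
have [eta [etap eta1 eta2]] : exists eta, [/\ 0 < eta, eta <= eta' &
     eta <= eps * A * b v u * tau / 2].
  exists (Num.min eta' (eps * A * b v u * tau / 2)); split.
  - by rewrite lt_min eta'0 !divr_gt0 ?mulr_gt0.
  - by rewrite ge_min lexx.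
  - by rewrite ge_min lexx orbT.
exists eta => // f hgood.
have hgood' : Good eta' f.
  by case: hgood => h1 h2 h3 h4; split => //; lra.
have dv := heta' f hgood'.
have [s1 [e1 hp hgap]] := good_gap hgood.
set g := tmin f (f y).
have gc : forall w, g w <= f y by move=> w; exact: tmin_le.
have hl := local_lemma hb v u gc (ltW eps0).
rewrite e1 in hl.
set g' := upd g v (g v - eps) in hl.
have [s' s'def] : exists s', s' = s1 + 2 * (eps ^+ 2 + 2 * eps * (f y - g v)) * (deg b v)
    - 4 * eps * (b v u * (g v - g u)) by eexists.
have hs' : (S b g' <= s'%:E)%E.
  have := S_ge0 hb g'; case: (S b g') hl => [r| |] hl _ //.
  rewrite -EFinD lee_fin in hl; rewrite lee_fin; lra.
have s'0 : 0 <= s' by rewrite -lee_fin (le_trans (S_ge0 hb g') hs').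
have := resist_B' hb hnz hA s'0 hs'.
have -> : g' y = f y.
  rewrite /g' /upd eq_sym (negbTE vy) /g /tmin lexx //.
have -> : g' x = f x.
  rewrite /g' /upd eq_sym (negbTE vx) /g /tmin.
  by case: hgood => _ -> _ _.
move=> hp'.
rewrite -/g in dv.
have gvu : g v <= f y := gc v.
have guu : g u <= f y := gc u.
have bvu0 := bvu.
have h1 : A * s1 - A * s' < 2 * eta by lra.
rewrite s'def in h1.
have key : 4 * (A * eps * b v u) * (f y - g u) < 4 * (A * eps * b v u) * (f y - g v)
   + 2 * eta + 2 * (A * eps) * (eps * deg b v) + 4 * (A * eps) * ((f y - g v) * deg b v).
  by move: h1; set dd := deg b v; set bb := b v u; nra.
have hed : eps * deg b v <= b v u * tau / 2 by lra.
have hdl : (f y - g v) * (b v u + deg b v) <= b v u * tau / 4.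
  rewrite -tau'd; apply: ler_wpM2r; [lra|exact: dv].
have Ae : 0 < A * eps by rewrite mulr_gt0.
have k1 : 2 * (A * eps) * (eps * deg b v) <= A * eps * (b v u * tau).
  have := ler_wpM2l (ltW Ae) hed; lra.
have k2 : 4 * (A * eps) * ((f y - g v) * (b v u + deg b v)) <= A * eps * (b v u * tau).
  have := ler_wpM2l (ltW Ae) hdl; lra.
have P0 : 0 < A * eps * b v u by rewrite mulr_gt0.
have : 4 * (A * eps * b v u) * (f y - g u) < 3 * (A * eps * b v u) * tau.
  by move: key k1 k2 eta2; set dd := deg b v; set bb := b v u; nra.
move=> h; rewrite leNgt; apply/negP => hlt.
have : (A * eps * b v u) * tau < (A * eps * b v u) * (f y - g u) by rewrite ltr_pM2l.
have := tau0; nra.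
Qed.


Lemma Good_mono e1 e2 f : e1 <= e2 -> Good e1 f -> Good e2 f.
Proof. by move=> h [h1 h2 h3 h4]; split => //; lra. Qed.

Lemma claim_z : Claim z.
Proof.
move=> tau tau0; exists 1 => // f [_ _ yz _].
rewrite /tmin; case: ifP => h; last by rewrite subrr ltW.
have -> : f z = f y by apply/le_anti; rewrite h yz.
by rewrite subrr ltW.
Qed.

Lemma claim_path : forall s u, path (fun a c => 0 < b a c) u s -> last u s = z ->
  y \notin u :: s -> x \notin s -> Claim u.
Proof.
elim=> [|v s IH] u /=; first by move=> _ -> _ _; exact: claim_z.
move=> /andP[buv ps] lz hy hx.
move: hy; rewrite inE negb_or => /andP[_ hy].
move: hx; rewrite inE negb_or => /andP[hvx hx].
apply: (step (v := v)); first by rewrite eq_sym.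
- by move: hy; rewrite inE negb_or eq_sym => /andP[].
- by rewrite (b_sym hb).
- exact: IH.
Qed.


Lemma final_contra : Claim x -> resist b x z = (A + B)%:E -> False.
Proof.
move=> cx hM.
have hAp' := hAp; have hBp' := hBp.
have hsup : forall eta, 0 < eta -> exists f : X -> R,
    S b f = 2%:E /\ A + B - eta < (f z - f x) ^+ 2.
  move=> eta etap.
  have : ((A + B - eta)%:E < resist b x z)%E.
    rewrite hM lte_fin ltrBlDr ltrDl //.
  move=> /ereal_sup_gt [_ [f /energy1 hf <-]] .
  by rewrite lte_fin => hgt; exists f; split => //; exact: hf.
clear hM.
have [tau [tau0 tau1 tau2]] : exists tau, [/\ 0 < tau, tau <= 1 &
    tau * (2 + B) <= A / 4].
  have h2B : 0 < 2 + B by lra.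
  exists (Num.min 1 (A / (4 * (2 + B)))); split.
  - by rewrite lt_min ltr01 divr_gt0 ?mulr_gt0.
  - by rewrite ge_min lexx.
  - have h : Num.min 1 (A / (4 * (2 + B))) <= A / (4 * (2 + B)).
      by rewrite ge_min lexx orbT.
    have := ler_wpM2r (ltW h2B) h.
    have -> : A / (4 * (2 + B)) * (2 + B) = A / 4.
      field; rewrite gt_eqF //.
    by [].

have [eta0 eta00 heta0] := cx tau tau0.
have [eta [etap eta1 eta2 eta3]] : exists eta, [/\ 0 < eta, eta <= eta0,
    eta <= A / 4 & eta <= B / 2].
  exists (Num.min eta0 (Num.min (A / 4) (B / 2))); split.
  - by rewrite !lt_min eta00 !divr_gt0.
  - by rewrite ge_min lexx.
  - by rewrite !ge_min lexx orbT.
  - by rewrite !ge_min lexx !orbT.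
have [f [hf hgt]] := hsup eta etap.
have [f' [hf' hxz hd]] : exists f' : X -> R, [/\ S b f' = 2%:E, f' x <= f' z &
    (f' z - f' x) ^+ 2 = (f z - f x) ^+ 2].
  have [xz|zx] := lerP (f x) (f z); first by exists f.
  exists (fun u => - f u); split; [by rewrite S_opp| lra |ring].
rewrite -hd in hgt.
have A0 := ltW hAp; have B0 := ltW hBp.
have [yx|xy] := ltrP (f' y) (f' x).
  have := bound_e2 hb hnz hf' hB; nra.
have [zy|yz] := ltrP (f' z) (f' y).
  have := bound_e2 hb hnz hf' hA; nra.
have hg : Good eta f' by split.
have := heta0 f' (Good_mono eta1 hg).
rewrite /tmin xy => hp.
have hq := bound_e2 hb hnz hf' hB.
have p0 : 0 <= f' y - f' x by lra.
have q0 : 0 <= f' z - f' y by lra.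
have e : f' z - f' x = (f' y - f' x) + (f' z - f' y) by ring.
rewrite e in hgt.
have : (f' y - f' x) ^+ 2 <= tau by nra.
have : 2 * tau * (f' z - f' y) <= tau * (1 + B) by nra.
nra.
Qed.

End G10.

Lemma edge_bound (R : realType) (X : countType) (b : X -> X -> R) (hb : is_graph b)
  (f : X -> R) u v : 0 < b u v -> S b f = 2%:E -> (f v - f u) ^+ 2 <= 2 / b u v.
Proof.
move=> buv hf; have := S_single hb f (u, v); rewrite hf lee_fin /term /=.
rewrite ler_pdivlMr // => h; have := sqrrB (f v) (f u); have := sqrrB (f u) (f v).
nra.
Qed.

Lemma path_fin (R : realType) (X : countType) (b : X -> X -> R) (hb : is_graph b) :
  forall s u, path (fun a c => 0 < b a c) u s ->
  exists K, forall f : X -> R, S b f = 2%:E -> (f (last u s) - f u) ^+ 2 <= K.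
Proof.
elim=> [|v s IH] u /=.
  by move=> _; exists 0 => f _; rewrite subrr expr0n.
move=> /andP[buv ps]; have [K hK] := IH v ps.
exists (2 * K + 2 * (2 / b u v)) => f hf.
have h1 := hK f hf; have h2 := edge_bound hb buv hf.
have : (f (last v s) - f u) ^+ 2 <=
   2 * (f (last v s) - f v) ^+ 2 + 2 * (f v - f u) ^+ 2.
  have := sqr_ge0 ((f (last v s) - f v) - (f v - f u)); nra.
lra.
Qed.

Unset Implicit Arguments.
Theorem proposition3p2 (R : realType) (X : countType) (b : X -> X -> R)
  (hb : is_graph b) (hnz : exists u v, b u v != 0) (x y z : X) :
  (resist b x z = resist b x y + resist b y z)%E <->
  (forall s : seq X, is_bpath b x z s -> y \in x :: s).
Proof.
split.
- move=> heq s hs; apply/negPn/negP => hy.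
  case/and3P: hs => hu hp /eqP hl.
  have xy : x != y by apply: contraNneq hy => ->; rewrite mem_head.
  have zy : z != y.
    by apply: contraNneq hy => <-; rewrite -hl mem_last.
  have [K hK] := path_fin hb hp.
  rewrite hl in hK.
  have hxz : (resist b x z <= K%:E)%E by apply: (resist_le hb) => f hf; exact: hK.
  have g0 := resist_ge0 hb hnz.
  case Exy: (resist b x y) heq => [A| |] heq; last by have := g0 x y; rewrite Exy.
  + case Eyz: (resist b y z) heq => [B| |] heq; last by have := g0 y z; rewrite Eyz.
    * have hAp := resist_pos hb hnz xy Exy.
      have yz : y != z by rewrite eq_sym.
      have hBp := resist_pos hb hnz yz Eyz.
      have hx : x \notin s by move: hu => /= /andP[].
      have cx := claim_path hb hnz Exy Eyz hAp hp hl hy hx.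
      rewrite -EFinD in heq.
      have := final_contra hb hnz Exy Eyz hAp hBp; apply; [exact: cx | exact: heq].
    * by move: hxz; rewrite heq.
  + by move: hxz; rewrite heq addye //; have := g0 y z; case: (resist b y z).
- move=> hsep.
  have [->|xy] := eqVneq x y; first by rewrite (resist_xx hb hnz) add0e.
  have [zy|zy] := eqVneq z y; first by rewrite zy (resist_xx hb hnz) adde0.
  by have := sep_eq hb hnz xy hsep; apply.
Qed.
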